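(* There is a constant $C$ such that for every $n$ and every integer $D\ge 2$ there exists a $[D,2D]$-preserving distance labeling scheme for the family $\mathcal G_n$ of unweighted graphs on $n$ nodes with maximum label size at most $C\cdot\frac{n}{D}\log^2 D$; i.e., of size $O\!\left(\frac{n}{D}\log^2 D\right)$.
   Context: A $[D,2D]$-preserving distance labeling scheme for a family $\mathcal G$ of graphs consists of, for each $G\in\mathcal G$, a map $e_G:V(G)\to\{0,1\}^*$ (labels), and a single decoder $d$ (not depending on $G$) such that for every $G\in\mathcal G$: (1) $d(e_G(u),e_G(v))\ge dist_G(u,v)$ for all $u,v\in V(G)$; (2) $d(e_G(u),e_G(v))=dist_G(u,v)$ for all $u,v\in V(G)$ with $dist_G(u,v)\in[D,2D]$. Here $dist_G$ is shortest-path distance (number of edges), and the maximum label size is $\max|e_G(u)|$ over all $G\in\mathcal G$, $u\in V(G)$. $\log$ is the natural logarithm. Graphs are unweighted; the paper states the result for both undirected and directed graphs (for directed graphs $dist_G$ is directed distance). *)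

(* Defs.v *)
From Stdlib Require Import Reals.
From mathcomp Require Import all_boot.
Set Implicit Arguments. Unset Strict Implicit. Unset Printing Implicit Defensive.

(* A (directed, unweighted) graph on the vertex set 'I_n is an edge relation
   G : rel 'I_n ; undirected graphs are the symmetric ones. *)

Definition walk (n : nat) (G : rel 'I_n) (u v : 'I_n) (k : nat) : Prop :=
  exists p : seq 'I_n, [/\ size p = k, path G u p & last u p = v].

Definition dist_is (n : nat) (G : rel 'I_n) (u v : 'I_n) (k : nat) : Prop :=
  walk G u v k /\ (forall k', k' < k -> ~ walk G u v k').

(* dist_G(u,v) <= x, where x : option nat and None encodes +infinity *)
Definition dist_le (n : nat) (G : rel 'I_n) (u v : 'I_n) (x : option nat) : Prop :=
  match x with
  | None => True
  | Some m => exists k, k <= m /\ walk G u v k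
  end.

Definition DD_preserving_scheme (n D : nat)
    (e : rel 'I_n -> 'I_n -> seq bool)
    (d : seq bool -> seq bool -> option nat) : Prop :=
  forall G : rel 'I_n,
    (forall u v, dist_le G u v (d (e G u) (e G v))) /\
    (forall u v k, dist_is G u v k -> D <= k <= 2 * D ->
        d (e G u) (e G v) = Some k).

(* Main.v *)
Require Import Defs.
From Stdlib Require Import Reals.
From mathcomp Require Import all_boot.
From Stdlib Require Import Lia Lra ClassicalEpsilon.
From mathcomp Require Import zify.
Set Implicit Arguments. Unset Strict Implicit. Unset Printing Implicit Defensive.
Set Warnings "-notation-overridden".

Section Walks.
Variables (n : nat) (G : rel 'I_n).

Definition walkb (u v : 'I_n) (k : nat) : bool :=
  [exists p : k.-tuple 'I_n, path G u p && (last u p == v)].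

Lemma walkP u v k : reflect (walk G u v k) (walkb u v k).
Proof.
apply: (iffP existsP) => [[p /andP[hp /eqP hl]] | [p [hs hp hl]]].
  by exists (val p); rewrite size_tuple.
have hs' : size p == k by rewrite hs.
by exists (Tuple hs'); rewrite /= hp hl eqxx.
Qed.

Lemma walk0 u : walk G u u 0.
Proof. by exists [::]. Qed.

Lemma walk_cat u w v a b : walk G u w a -> walk G w v b -> walk G u v (a + b).
Proof.
move=> [p [hs hp hl]] [q [hs' hq hl']]; exists (p ++ q).
by rewrite size_cat cat_path last_cat hs hs' hp hl hq hl'.
Qed.

Lemma walk_split u v k j : walk G u v k -> j <= k ->
  exists w, walk G u w j /\ walk G w v (k - j).
Proof.
move=> [p [hs hp hl]] hj; exists (last u (take j p)); split.
  exists (take j p); split => //; first by rewrite size_take hs; case: ltngtP hj.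
  by move: hp; rewrite -{1}(cat_take_drop j p) cat_path => /andP[].
exists (drop j p); split; first by rewrite size_drop hs.
  by move: hp; rewrite -{1}(cat_take_drop j p) cat_path => /andP[].
by rewrite -last_cat cat_take_drop.
Qed.

Lemma walk_short u v k : walk G u v k -> exists k', k' < n /\ walk G u v k'.
Proof.
move=> [p [hs hp hl]]; case: (shortenP hp) hl => p' hp' hu _ hl.
exists (size p'); split; last by exists p'.
move: (card_uniqP hu) => /= h. have := max_card (mem (u :: p')).
by rewrite h card_ord /=.
Qed.

Variable D : nat.

Definition cd (u v : 'I_n) : nat := find (walkb u v) (iota 0 (2 * D).+1).

Lemma cd_le u v : cd u v <= (2 * D).+1.
Proof. by rewrite /cd -{2}(size_iota 0 (2 * D).+1) find_size. Qed.

Lemma cd_walk u v : cd u v <= 2 * D -> walk G u v (cd u v).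
Proof.
move=> h. have hh : has (walkb u v) (iota 0 (2 * D).+1) by rewrite has_find size_iota.
have := nth_find 0 hh; rewrite -/(cd u v) nth_iota // add0n => /walkP //.
Qed.

Lemma cd_min u v k : walk G u v k -> k <= 2 * D -> cd u v <= k.
Proof.
move=> hw hk; rewrite leqNgt; apply/negP => hlt.
have := before_find 0 hlt; rewrite nth_iota // add0n => /negbT/negP; apply.
exact/walkP.
Qed.

Lemma cd_dist u v k : dist_is G u v k -> k <= 2 * D -> cd u v = k.
Proof.
move=> [hw hn] hk; have h1 := cd_min hw hk.
apply/eqP; rewrite eqn_leq h1 /= leqNgt; apply/negP => hlt.
apply: (hn _ hlt); apply: cd_walk; exact: leq_trans h1 hk.
Qed.

Lemma cd_refl u : cd u u = 0.
Proof. by apply/eqP; rewrite -leqn0; apply: cd_min (walk0 u) _. Qed.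

Lemma cd_split u v j : cd u v <= 2 * D -> j <= cd u v ->
  exists s, cd u s = j /\ cd s v = cd u v - j.
Proof.
move=> hk hj; have [w [h1 h2]] := walk_split (cd_walk hk) hj.
exists w.
have c1 : cd u w <= j by apply: cd_min h1 (leq_trans hj hk).
have c2 : cd w v <= cd u v - j by apply: cd_min h2 (leq_trans (leq_subr _ _) hk).
have w1 := cd_walk (leq_trans c1 (leq_trans hj hk)).
have w2 := cd_walk (leq_trans c2 (leq_trans (leq_subr _ _) hk)).
have c3 : cd u v <= cd u w + cd w v.
  apply: cd_min (walk_cat w1 w2) _.
  apply: leq_trans hk; move: c1 c2 hj; clear; lia.
split; move: c1 c2 c3 hj; clear; lia.
Qed.

Definition Hs (u v : 'I_n) : {set 'I_n} := [set s | cd u s + cd s v == cd u v].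

Lemma Hs_card u v : cd u v <= 2 * D -> (cd u v).+1 <= #|Hs u v|.
Proof.
move=> hk.
pose g (j : 'I_(cd u v).+1) : 'I_n := odflt u [pick s in Hs u v | cd u s == j].
have gP : forall j : 'I_(cd u v).+1, cd u (g j) = j /\ g j \in Hs u v.
  move=> j; rewrite /g; case: pickP => [s /andP[hs /eqP hj] | hno] //=.
  have [s [h1 h2]] := cd_split hk (ltnSE (ltn_ord j)).
  move: (hno s); rewrite inE h1 h2 eqxx subnKC ?eqxx //; exact: ltnSE (ltn_ord j).
have ginj : injective g.
  move=> i j hij; apply: val_inj; have := proj1 (gP i); rewrite hij (proj1 (gP j)) => h; exact/esym.
rewrite -{1}(card_ord (cd u v).+1) -(card_imset (mem 'I_(cd u v).+1) ginj).
apply: subset_leq_card; apply/subsetP => x /imsetP[j _ ->]; exact: (proj2 (gP j)).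
Qed.

End Walks.

Lemma cardsum (P : finType) (X : {set P}) : #|X| = \sum_(p : P) (p \in X).
Proof. rewrite -sum1_card big_mkcond /=. apply: eq_bigr => p _. by case: (p \in X). Qed.

Section Greedy.
Variables (T P : finType) (t0 : T) (h : P -> {set T}) (L : nat) (A : {set P}).
Hypothesis hL : forall p, p \in A -> L <= #|h p|.

Definition unhit (S : seq T) := [set p in A | [disjoint h p & S]].

Lemma avg (U : {set P}) : U \subset A ->
  exists s, L * #|U| <= #|T| * #|U :&: [set p | s \in h p]|.
Proof.
move=> sUA.
pose f s := #|U :&: [set p | s \in h p]|.
have e1 : \sum_(s : T) f s = \sum_(p in U) #|h p|.
  rewrite /f; under eq_bigr => s _ do rewrite cardsum.
  under [RHS]eq_bigr => p _ do rewrite cardsum.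
  rewrite exchange_big /= [RHS]big_mkcond /=; apply: eq_bigr => p _.
  rewrite (eq_bigr (fun s => (p \in U) && (s \in h p) : nat)); last by move=> s _; rewrite !inE.
  by case: (p \in U) => //=; rewrite big1.
have e2 : L * #|U| <= \sum_(p in U) #|h p|.
  rewrite -sum1_card big_distrr /= muln1; apply: leq_sum => p hp.
  apply: hL; exact: (subsetP sUA).
exists [arg max_(s > t0) f s].
case: arg_maxnP => // s _ hs.
apply: leq_trans e2 _; rewrite -e1.
apply: (@leq_trans (\sum_(i : T) f s)); first by apply: leq_sum => i _; exact: hs.
by rewrite sum_nat_const.
Qed.

Lemma greedy t : exists S : seq T, size S = t /\
  #|T| ^ t * #|unhit S| <= (#|T| - L) ^ t * #|A|.
Proof.
elim: t => [|t [S [hs hb]]].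
  exists [::]; split => //; rewrite !expn0 !mul1n; apply: subset_leq_card.
  by apply/subsetP => p; rewrite inE => /andP[].
have sUA : unhit S \subset A by apply/subsetP => p; rewrite inE => /andP[].
have [s hs'] := avg sUA.
exists (s :: S); split; first by rewrite /= hs.
have eU : unhit (s :: S) = unhit S :\: [set p | s \in h p].
  apply/setP => p; rewrite !inE disjoint_sym disjoint_cons disjoint_sym.
  by case: (s \in h p); case: (p \in A); case: [disjoint h p & S].
have ec := cardsID [set p | s \in h p] (unhit S).
rewrite eU.
have key : #|T| * #|unhit S :\: [set p | s \in h p]| <= (#|T| - L) * #|unhit S|.
  move: hs' ec; set a := #|_ :&: _|; set b := #|_ :\: _|; set c := #|unhit S|.
  move=> h1 h2; rewrite mulnBl; rewrite -h2; move: h1; rewrite -h2; nia.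
apply: (@leq_trans (#|T|^t * ((#|T| - L) * #|unhit S|))).
  by rewrite expnS (mulnC #|T|) -mulnA leq_mul2l key orbT.
by rewrite mulnCA expnS -mulnA leq_mul2l hb orbT.
Qed.
End Greedy.

Lemma bern (nn L q : nat) : (nn - L) ^ q * (nn + q * L) <= nn ^ q.+1.
Proof.
elim: q => [|q IH]; first by rewrite !expn0 !mul0n addn0 mul1n expn1.
case: (posnP nn) => [->|hn]; first by rewrite sub0n exp0n.
rewrite -(leq_pmul2r hn).
have h1 : (nn - L) * (nn + q.+1 * L) <= nn * (nn + q * L).
  case: (leqP L nn) => hL; last first.
    by rewrite (_ : nn - L = 0) ?mul0n //; apply/eqP; rewrite subn_eq0 ltnW.
  move: (subnK hL); set a := nn - L => ha; rewrite -ha; nia.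
rewrite expnS [nn ^ q.+2]expnS.
set X := (nn - L) ^ q; set Y := nn ^ q.+1.
apply: (@leq_trans (X * (nn * (nn + q * L)) * nn)).
  have := leq_mul (leq_mul h1 (leqnn X)) (leqnn nn); move: (nn - L) => z. nia.
have := leq_mul (leq_mul IH (leqnn nn)) (leqnn nn); rewrite -/X -/Y. nia.
Qed.

Lemma halve nn L q : 0 < nn -> nn <= q * L -> 2 * (nn - L) ^ q <= nn ^ q.
Proof.
move=> hn hq; have := bern nn L q; rewrite expnS => hb.
rewrite -(leq_pmul2r hn); move: hb; set x := (nn - L) ^ q; set y := nn ^ q => hb.
have : x * (2 * nn) <= x * (nn + q * L) by rewrite leq_mul2l mul2n -addnn leq_add2l hq orbT.
nia.
Qed.

Lemma decay nn L q j : 0 < nn -> nn <= q * L -> 2 ^ j * (nn - L) ^ (q * j) <= nn ^ (q * j).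
Proof.
move=> hn hq; elim: j => [|j IH]; first by rewrite muln0 !expn0.
rewrite mulnS !expnD expnS.
have := halve hn hq; move: IH; set a := 2 ^ j; set b := (nn - L) ^ (q * j); set c := nn ^ (q * j).
set x := (nn - L) ^ q; set y := nn ^ q => h1 h2.
have := leq_mul h1 h2; nia.
Qed.

Definition omin (s : seq nat) : option nat :=
  if s is x :: s' then Some (foldr minn x s') else None.

Lemma omin_spec s y : omin s = Some y -> y \in s /\ forall z, z \in s -> y <= z.
Proof.
case: s => [|x s] //= [<-]; elim: s => [|a s [IH1 IH2]] /=.
  by split; [rewrite mem_seq1 | move=> z; rewrite mem_seq1 => /eqP ->].
split.
  rewrite /minn; case: ifP => _; first by rewrite !inE eqxx orbT.
  by move: IH1; rewrite !inE; case/orP => ->; rewrite ?orbT.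
move=> z; rewrite !inE geq_min => /or3P[/eqP->|/eqP->|hz].
- by rewrite IH2 ?orbT // mem_head.
- by rewrite leqnn.
- by rewrite IH2 ?orbT // inE hz orbT.
Qed.

Lemma omin_some s z : z \in s -> exists y, omin s = Some y.
Proof. by case: s => // x s _; exists (foldr minn x s). Qed.

Fixpoint bits (M k : nat) : seq bool :=
  if M is M'.+1 then odd k :: bits M' k./2 else [::].

Lemma size_bits M k : size (bits M k) = M.
Proof. by elim: M k => //= M IH k; rewrite IH. Qed.

Lemma bits_inj M k1 k2 : k1 < 2 ^ M -> k2 < 2 ^ M -> bits M k1 = bits M k2 -> k1 = k2.
Proof.
elim: M k1 k2 => [|M IH] k1 k2 /=; first by rewrite expn0 !ltnS !leqn0 => /eqP-> /eqP->.
move=> h1 h2 [ho hh].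
have e1 : k1./2 < 2 ^ M by rewrite -ltn_double -!mul2n -expnS; move: h1 (odd_double_half k1); rewrite -mul2n; lia.
have e2 : k2./2 < 2 ^ M by rewrite -ltn_double -!mul2n -expnS; move: h2 (odd_double_half k2); rewrite -mul2n; lia.
by rewrite -(odd_double_half k1) -(odd_double_half k2) ho (IH _ _ e1 e2 hh).
Qed.

Lemma INR_mul a b : INR (a * b) = Rmult (INR a) (INR b).
Proof. exact: mult_INR. Qed.
Lemma INR_add a b : INR (a + b) = Rplus (INR a) (INR b).
Proof. exact: plus_INR. Qed.
Lemma INR_exp a b : INR (a ^ b) = pow (INR a) b.
Proof. elim: b => [|b IH]; first by rewrite expn0. by rewrite expnS INR_mul IH. Qed.

Lemma exp_pow_INR x k : pow (exp x) k = exp (Rmult (INR k) x).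
Proof.
elim: k => [|k IH]; first by rewrite /= Rmult_0_l exp_0.
change (pow (exp x) k.+1) with (Rmult (exp x) (pow (exp x) k)).
rewrite IH -exp_plus S_INR; f_equal; ring.
Qed.

Lemma pow3 a b : (a + b) ^ a <= 3 ^ b * a ^ a.
Proof.
case: (posnP a) => [->|ha]; first by rewrite !expn0 muln1 expn_gt0.
apply/leP; apply: INR_le; rewrite INR_exp INR_mul !INR_exp INR_add.
have hA : Rlt 0 (INR a) by apply: lt_0_INR; apply/ltP.
have hB : Rle 0 (INR b) by apply: pos_INR.
have h1 : Rle (Rplus (INR a) (INR b)) (Rmult (INR a) (exp (Rdiv (INR b) (INR a)))).
  have := exp_ineq1_le (INR b / INR a).
  move=> h; apply: Rle_trans (Rmult_le_compat_l _ _ _ (Rlt_le _ _ hA) h).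
  right; field; lra.
apply: Rle_trans (pow_incr _ _ a (conj _ h1)) _; first lra.
rewrite Rpow_mult_distr exp_pow_INR Rmult_comm.
apply: Rmult_le_compat_r; first by apply: pow_le; lra.
have -> : Rmult (INR a) (Rdiv (INR b) (INR a)) = Rmult (INR b) 1 by field; lra.
rewrite -exp_pow_INR; apply: pow_incr; split; [apply: Rlt_le; apply: exp_pos | ].
apply: Rle_trans exp_le_3 _; right; simpl; ring.
Qed.

Lemma card_small (T : finType) m :
  #|[pred A : {set T} | #|A| <= m]| = \sum_(i < m.+1) 'C(#|T|, i).
Proof.
under eq_bigr => i _ do rewrite -card_draws.
rewrite -sum1_card.
rewrite (partition_big (fun A : {set T} => inord #|A| : 'I_m.+1) predT) //=.
apply: eq_bigr => i _; rewrite -sum1_card; apply: eq_bigl => A.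
rewrite !inE; apply/andP/eqP => [[h /eqP <-]|h]; first by rewrite inordK.
split; first by rewrite h -ltnS ltn_ord.
by apply/eqP; apply: val_inj; rewrite /= h inordK.
Qed.

Lemma binom_sum N m : m <= N ->
  (\sum_(i < m.+1) 'C(N, i)) * (m ^ m * N ^ (N - m)) <= (N + m) ^ N.
Proof.
move=> hm; rewrite expnDn big_distrl /=.
rewrite (@big_ord_widen _ _ _ _ N.+1 (fun i => 'C(N, i) * (m ^ m * N ^ (N - m)))) ?ltnS //.
rewrite big_mkcond /=; apply: leq_sum => i _.
case: ifP => // hi; rewrite leq_mul2l; apply/orP; right.
have hi' : i <= m by rewrite -ltnS.
have e1 : m ^ m = m ^ i * m ^ (m - i) by rewrite -expnD subnKC.
have e2 : N ^ (N - i) = N ^ (m - i) * N ^ (N - m).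
  have h : m - i + (N - m) = N - i by lia.
  by rewrite -expnD h.
have e3 : m ^ (m - i) <= N ^ (m - i) by elim: (m - i) => // k IH; rewrite !expnS leq_mul.
rewrite e1 e2; move: e3; set a := m ^ i; set b := m ^ (m - i); set c := N ^ (m - i); set d := N ^ (N - m).
move=> e3; have := leq_mul (leq_mul (leqnn a) e3) (leqnn d); nia.
Qed.

Lemma leq_expl a b k : a <= b -> a ^ k <= b ^ k.
Proof. by move=> h; elim: k => // k IH; rewrite !expnS leq_mul. Qed.

Lemma small_bound N m r : 0 < m -> m <= N -> N <= m * r ->
  \sum_(i < m.+1) 'C(N, i) <= (3 * r) ^ m.
Proof.
move=> hm hmN hN.
have hN0 : 0 < N by apply: leq_trans hm hmN.
have h1 := binom_sum hmN.
have h2 := pow3 N m.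
have h3 : N ^ N = N ^ m * N ^ (N - m) by rewrite -expnD subnKC.
have h4 : N ^ m <= m ^ m * r ^ m by rewrite -expnMn; exact: leq_expl.
have hp : 0 < N ^ (N - m) by rewrite expn_gt0 hN0.
have hpm : 0 < m ^ m by rewrite expn_gt0 hm.
rewrite expnMn.
have h12 := leq_trans h1 h2; rewrite h3 in h12.
move: h12 h4 hp hpm.
set S := \sum_(i < m.+1) _; set a := m ^ m; set b := N ^ (N - m); set c := N ^ m; set d := r ^ m; set e := 3 ^ m.
move=> h12 h4 hp hpm.
have h5 : S * a * b <= e * c * b by move: h12; rewrite !mulnA.
rewrite leq_pmul2r // in h5.
have h6 : S * a <= e * d * a by apply: leq_trans h5 _; rewrite -mulnA leq_mul2l (mulnC d) h4 orbT.
by rewrite leq_pmul2r in h6.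
Qed.

Section Scheme.
Variables (n D : nat).
Hypotheses (hD2 : 2 <= D) (hDn : D < n).

Definition tl := trunc_log 2 D.
Definition xx := n %/ D.
Definition qq := (n %/ D.+1).+1.
Definition jj := 2 * tl.+1.
Definition tt := qq * jj.
Definition KK := tt + xx.

Local Notation Lab := ('I_n * {ffun 'I_KK -> 'I_(2 * D).+2} * {ffun 'I_KK -> 'I_(2 * D).+2}
   * {A : {set ('I_n * 'I_D.+1)} | #|A| <= xx})%type.

Definition cands (a b : Lab) : seq nat :=
  [seq val (a.1.1.2 i) + val (b.1.2 i) | i <- enum 'I_KK &
      (val (a.1.1.2 i) <= 2 * D) && (val (b.1.2 i) <= 2 * D)] ++
  [seq D + val k | k <- enum 'I_D.+1 & (b.1.1.1, k) \in val a.2].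

Definition dec (a b : Lab) : option nat := omin (cands a b).

Lemma n_pos : 0 < n. Proof. exact: leq_ltn_trans (leq0n _) hDn. Qed.

Section ForG.
Variable G : rel 'I_n.
Local Notation cd := (cd G D).

Definition AA := [set p : 'I_n * 'I_n | D <= cd p.1 p.2 <= 2 * D].
Definition hh (p : 'I_n * 'I_n) := Hs G D p.1 p.2.

Lemma hL p : p \in AA -> D.+1 <= #|hh p|.
Proof.
rewrite inE => /andP[h1 h2]; apply: leq_trans (Hs_card h2); by rewrite ltnS.
Qed.

Variable S0 : seq 'I_n.
Hypothesis hS0s : size S0 = tt.
Hypothesis hS0 : #|'I_n| ^ tt * #|unhit hh AA S0| <= (#|'I_n| - D.+1) ^ tt * #|AA|.

Definition UU := unhit hh AA S0.

Lemma U_bound : D * D * #|UU| <= n * n.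
Proof.
have hq : n <= qq * D.+1 by apply: ltnW; apply: ltn_ceil.
have hdec := decay jj n_pos hq.
have hj : D * D <= 2 ^ jj.
  have h := trunc_log_ltn D (isT : 1 < 2).
  rewrite /jj mul2n -addnn expnD; apply: leq_mul; exact: ltnW.
have hA : #|AA| <= n * n.
  by apply: leq_trans (max_card _) _; rewrite card_prod card_ord.
move: hS0; rewrite card_ord -/UU /tt => hS.
have hp : 0 < n ^ (qq * jj) by rewrite expn_gt0 n_pos.
rewrite -(leq_pmul2l hp).
move: hS hdec hj hA; set a := n ^ _; set b := (n - D.+1) ^ _; set c := #|UU|; set e := #|AA|.
move=> hS hdec hj hA.
have f1 := leq_mul (leqnn (D * D)) hS.
have f2 := leq_mul (leq_mul hj (leqnn b)) (leqnn e).
have f3 := leq_mul hdec (leqnn e).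
have f4 := leq_mul (leqnn a) hA.
nia.
Qed.

Definition YY (u : 'I_n) : {set 'I_n * 'I_D.+1} :=
  [set pr : 'I_n * 'I_D.+1 | (cd u pr.1 == D + pr.2) && ((u, pr.1) \in UU)].

Definition bad := [set u | xx < #|YY u|].

Lemma Y_le u : #|YY u| <= #|[set p in UU | p.1 == u]|.
Proof.
have inj : {in YY u &, injective (fun pr : 'I_n * 'I_D.+1 => (u, pr.1))}.
  move=> [a1 a2] [b1 b2]; rewrite !inE /= => /andP[/eqP ha _] /andP[/eqP hb _] [e].
  subst b1; congr (_, _); apply: val_inj; move: ha hb => -> /eqP; rewrite eqn_add2l => /eqP.
  by [].
rewrite -(card_in_imset inj); apply: subset_leq_card; apply/subsetP => p /imsetP[pr].
by rewrite !inE => /andP[_ h] ->; rewrite h eqxx.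
Qed.

Lemma U_part : #|UU| = \sum_(u : 'I_n) #|[set p in UU | p.1 == u]|.
Proof.
rewrite -sum1_card (partition_big (fun p : 'I_n * 'I_n => p.1) predT) //=.
apply: eq_bigr => u _; rewrite -sum1_card; apply: eq_bigl => p; by rewrite !inE.
Qed.

Lemma bad_le : #|bad| <= xx.
Proof.
have h1 : #|bad| * xx.+1 <= #|UU|.
  rewrite U_part -sum_nat_const (big_mkcond (fun u => u \in bad)) /=.
  apply: leq_sum => u _; case: ifP => //; rewrite inE => hb.
  exact: leq_trans hb (Y_le u).
have h2 := U_bound.
have h3 : n < xx.+1 * D by apply: ltn_ceil; exact: leq_trans _ hD2.
rewrite /xx leq_divRL; last exact: leq_trans _ hD2.
move: h1 h2 h3; rewrite -/xx; set b := #|bad|; set c := #|UU| => h1 h2 h3.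
have h4 : b * xx.+1 * (D * D) <= n * n by apply: leq_trans _ h2; rewrite mulnC leq_mul2l h1 orbT.
nia.
Qed.

Definition u0 : 'I_n := Ordinal n_pos.
Definition Slist := S0 ++ enum bad.

Lemma Slist_size : size Slist <= KK.
Proof. by rewrite size_cat hS0s -cardE leq_add2l bad_le. Qed.

Definition sf (i : 'I_KK) : 'I_n := nth u0 Slist i.

Lemma sf_in s : s \in Slist -> exists i : 'I_KK, sf i = s.
Proof.
move=> hs; have hi : index s Slist < KK by apply: leq_trans Slist_size; rewrite index_mem.
by exists (Ordinal hi); rewrite /sf /= nth_index.
Qed.

Definition XX (u : 'I_n) : {set 'I_n * 'I_D.+1} := if #|YY u| <= xx then YY u else set0.

Lemma XX_small u : #|XX u| <= xx.
Proof. by rewrite /XX; case: ifP => // _; rewrite cards0. Qed.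

Definition lab (u : 'I_n) : Lab :=
  (u, [ffun i => inord (cd u (sf i))], [ffun i => inord (cd (sf i) u)],
   exist (fun A : {set 'I_n * 'I_D.+1} => #|A| <= xx) (XX u) (XX_small u)).

Lemma inordcd (a b : 'I_n) : nat_of_ord (inord (cd a b) : 'I_(2 * D).+2) = cd a b.
Proof. by rewrite inordK // ltnS cd_le. Qed.

Lemma cands_walk u v c : c \in cands (lab u) (lab v) -> walk G u v c.
Proof.
rewrite mem_cat => /orP[/mapP[i] | /mapP[k]].
  rewrite mem_filter /= !ffunE !inordcd => /andP[/andP[h1 h2] _] ->.
  exact: walk_cat (cd_walk h1) (cd_walk h2).
rewrite mem_filter /= /XX => /andP[]; case: ifP => _; last by rewrite inE.
rewrite inE /= => /andP[/eqP hc _] _ ->; rewrite -hc; apply: cd_walk.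
rewrite hc mul2n -addnn leq_add2l; exact: (ltnSE (ltn_ord k)).
Qed.

Lemma landmark u v s : s \in Slist -> cd u s + cd s v = cd u v -> cd u v <= 2 * D ->
  cd u v \in cands (lab u) (lab v).
Proof.
move=> hs he hk; have [i hi] := sf_in hs.
rewrite mem_cat; apply/orP; left; apply/mapP; exists i; last by rewrite /= !ffunE !inordcd hi.
rewrite mem_filter mem_enum andbT /= !ffunE !inordcd hi.
by apply/andP; split; apply: leq_trans hk; rewrite -he ?leq_addr ?leq_addl.
Qed.

Lemma cand_exists u v : D <= cd u v <= 2 * D -> cd u v \in cands (lab u) (lab v).
Proof.
move=> /andP[h1 h2]; have hA : (u, v) \in AA by rewrite inE h1 h2.
case hU: ((u, v) \in UU); last first.
  move: hU; rewrite /UU /unhit inE hA /= => /negbT; case/existsP => s.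
  move=> /andP[hs hS].
  apply: (landmark (s := s)) => //; first by rewrite mem_cat; apply/orP; left.
  by apply/eqP; move: hs; rewrite /hh /Hs /= inE.
case hY: (#|YY u| <= xx); last first.
  apply: (landmark (s := u)) => //; last by rewrite cd_refl.
  by rewrite mem_cat mem_enum inE ltnNge hY orbT.
rewrite mem_cat; apply/orP; right; apply/mapP.
have hk : cd u v - D < D.+1 by rewrite ltnS leq_subLR; move: h2; clear; lia.
exists (Ordinal hk); last by rewrite /= subnKC.
rewrite mem_filter mem_enum andbT /= /XX hY inE /= hU andbT subnKC //.
Qed.

Lemma lab_correct :
  (forall u v, dist_le G u v (dec (lab u) (lab v))) /\
  (forall u v k, dist_is G u v k -> D <= k <= 2 * D -> dec (lab u) (lab v) = Some k).
Proof.
split.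
  move=> u v; rewrite /dist_le; case hd: (dec _ _) => [y|] //.
  have [hy _] := omin_spec hd; exists y; split => //; exact: cands_walk.
move=> u v k hdist /andP[h1 h2].
have hcd := cd_dist hdist h2.
have hc : k \in cands (lab u) (lab v) by rewrite -hcd; apply: cand_exists; rewrite hcd h1 h2.
have [y hy] := omin_some hc; rewrite /dec hy.
have [hy1 hy2] := omin_spec hy.
congr Some; apply/eqP; rewrite eqn_leq hy2 //= leqNgt; apply/negP => hlt.
exact: (proj2 hdist) _ hlt (cands_walk hy1).
Qed.
End ForG.
End Scheme.

Notation Lab n D := ('I_n * {ffun 'I_(KK n D) -> 'I_(2 * D).+2} * {ffun 'I_(KK n D) -> 'I_(2 * D).+2}
   * {A : {set ('I_n * 'I_D.+1)} | #|A| <= xx n D})%type.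
Lemma tl_ge1 D : 2 <= D -> 1 <= tl D.
Proof. move=> hD2. by rewrite /tl trunc_log_gt0; apply/andP; split. Qed.
Lemma xx_ge1 n D : 2 <= D -> D < n -> 1 <= xx n D.
Proof. move=> hD2 hDn. rewrite /xx leq_divRL ?mul1n. by apply: ltnW. by apply: leq_trans hD2. Qed.
Lemma D_lt D : D < 2 ^ (tl D).+1.
Proof. exact: trunc_log_ltn. Qed.

Definition MM n D := (xx n D + (tl D).+1) + 2 * (KK n D * (tl D + 3)) + xx n D * (2 * tl D + 6).

Lemma card_Lab n D : 2 <= D -> D < n -> #|{: Lab n D}| <= 2 ^ MM n D.
Proof.
move=> hD2 hDn.
rewrite !card_prod !card_ffun !card_ord card_sig.
rewrite card_small card_prod !card_ord.
have hx := xx_ge1 hD2 hDn; have ht := tl_ge1 hD2; have hd := D_lt D.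
have hD0 : 0 < D by apply: leq_trans hD2.
have hn : n < (xx n D).+1 * D by apply: ltn_ceil.
move: hd; set X := 2 ^ (tl D).+1 => hd.
have e1 : n <= 2 ^ (xx n D + (tl D).+1).
  rewrite expnD; apply: ltnW; apply: leq_trans hn _; apply: leq_mul; last exact: ltnW.
  by apply: ltn_expl.
have e2 : (2 * D).+2 <= 2 ^ (tl D + 3).
  have -> : tl D + 3 = (tl D).+1 + 2 by rewrite addSnnS.
  rewrite expnD -/X (_ : 2 ^ 2 = 4) //; lia.
have e2' : (2 * D).+2 ^ KK n D * (2 * D).+2 ^ KK n D <= 2 ^ (2 * (KK n D * (tl D + 3))).
  have -> : 2 * (KK n D * (tl D + 3)) = (tl D + 3) * KK n D + (tl D + 3) * KK n D by lia.
  by rewrite expnD expnM; apply: leq_mul; apply: leq_expl.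
have e3 : \sum_(i < (xx n D).+1) 'C(n * D.+1, i) <= 2 ^ (xx n D * (2 * tl D + 6)).
  have hxD : D <= xx n D * D by apply: leq_pmull.
  have hxn : xx n D <= n by apply: leq_div.
  have hn2 : n <= xx n D * (2 * D) by move: hn hxD; rewrite mulSn; lia.
  apply: leq_trans (@small_bound _ _ (2 * D * D.+1) hx _ _) _.
  - by apply: leq_trans hxn _; apply: leq_pmulr.
  - rewrite mulnA; exact: leq_mul.
  - rewrite (mulnC (xx n D)) expnM; apply: leq_expl.
    have : D * D.+1 <= X * X by apply: leq_mul; [apply: ltnW|].
    have -> : 2 * tl D + 6 = (tl D).+1 + (tl D).+1 + 4 by lia.
    rewrite !expnD -/X (_ : 2 ^ 4 = 16) //. lia.
have -> : 2 ^ MM n D = 2 ^ (xx n D + (tl D).+1) * 2 ^ (2 * (KK n D * (tl D + 3))) *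
   2 ^ (xx n D * (2 * tl D + 6)) by rewrite /MM -!expnD.
rewrite -(mulnA n); apply: leq_mul; last exact: e3.
exact: leq_mul e1 e2'.
Qed.

Lemma MM_bound n D : 2 <= D -> D < n -> MM n D <= 100 * (xx n D * (tl D * tl D)).
Proof.
move=> hD2 hDn.
have hx := xx_ge1 hD2 hDn; have ht := tl_ge1 hD2.
have hq : qq n D <= (xx n D).+1.
  rewrite /qq ltnS /xx; apply: leq_div2l => //; exact: leq_trans hD2.
rewrite /MM /KK /tt /jj.
move: hx ht hq; set x := xx n D; set t := tl D; set q := qq n D => hx ht hq.
have hK : (q * (2 * t.+1) + x) * (t + 3) <= (x.+1 * (2 * t.+1) + x) * (t + 3).
  by apply: leq_mul => //; rewrite leq_add2r leq_mul2r hq orbT.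
have a1 : x * t <= x * (t * t) by rewrite leq_mul2l leq_pmulr ?orbT.
have a2 : t * t <= x * (t * t) by rewrite leq_pmull.
have a3 : t <= t * t by rewrite leq_pmull.
have a4 : x <= x * t by rewrite leq_pmulr.
nia.
Qed.

Definition CC : R := Rdiv (INR 100) (Rmult (ln (INR 2)) (ln (INR 2))).

Lemma ln_le' a b : Rlt 0 a -> Rle a b -> Rle (ln a) (ln b).
Proof.
move=> ha [hab|->]; last exact: Rle_refl.
apply: Rlt_le; exact: ln_increasing.
Qed.

Lemma real_bound n D : 2 <= D -> D < n ->
  Rle (INR (MM n D)) (Rmult (Rmult CC (Rdiv (INR n) (INR D))) (pow (ln (INR D)) 2)).
Proof.
move=> hD2 hDn.
have hD0 : 0 < D by apply: leq_trans hD2.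
have hM := MM_bound hD2 hDn.
have hxD : xx n D * D <= n by apply: leq_divM.
have h2t : 2 ^ tl D <= D by apply: trunc_logP.
move/leP/le_INR: hM => hM; move/leP/le_INR: hxD => hxD; move/leP/le_INR: h2t => h2t.
rewrite !INR_mul in hM; rewrite INR_mul in hxD; rewrite INR_exp in h2t.
move: hM hxD h2t.
have hx0 := pos_INR (xx n D); have ht0 := pos_INR (tl D).
have hd : Rlt 0 (INR D) by apply: lt_0_INR; apply/ltP.
have h2 : Rlt 0 (INR 2) by apply: lt_0_INR; apply/ltP.
have hl : Rlt 0 (ln (INR 2)).
  rewrite -ln_1; apply: ln_increasing; first exact: Rlt_0_1.
  simpl; lra.
rewrite /CC.
set x := INR (xx n D); set t := INR (tl D); set N := INR n; set d := INR D.
set l := ln (INR 2) => hM hxD h2t.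
have ht : Rle (Rmult t l) (ln d).
  have := ln_le' (pow_lt _ (tl D) h2) h2t; rewrite ln_pow //.
have hxN : Rle x (Rdiv N d).
  rewrite /Rdiv; apply: (Rmult_le_reg_r d) => //.
  rewrite Rmult_assoc Rinv_l; last exact: Rgt_not_eq. lra.
have htu : Rle t (Rdiv (ln d) l).
  rewrite /Rdiv; apply: (Rmult_le_reg_r l) => //.
  rewrite Rmult_assoc Rinv_l; last exact: Rgt_not_eq. lra.
have htt : Rle (Rmult t t) (Rmult (Rdiv (ln d) l) (Rdiv (ln d) l)).
  by apply: Rmult_le_compat.
have hxtt : Rle (Rmult x (Rmult t t)) (Rmult (Rdiv N d) (Rmult (Rdiv (ln d) l) (Rdiv (ln d) l))).
  apply: Rmult_le_compat => //; apply: Rmult_le_pos => //.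
apply: Rle_trans hM _.
have e : Rmult (Rmult (Rdiv (INR 100) (Rmult l l)) (Rdiv N d)) (pow (ln d) 2) =
         Rmult (INR 100) (Rmult (Rdiv N d) (Rmult (Rdiv (ln d) l) (Rdiv (ln d) l))).
  simpl; field; split; exact: Rgt_not_eq.
rewrite e; apply: Rmult_le_compat_l; first exact: pos_INR.
exact: hxtt.
Qed.

Definition codeL n D (a : Lab n D) : seq bool := bits (MM n D) (enum_rank a).
Definition decodeL n D (s : seq bool) : option (Lab n D) := [pick a : Lab n D | codeL a == s].

Lemma decode_code n D : 2 <= D -> D < n -> forall a : Lab n D, decodeL n D (codeL a) = Some a.
Proof.
move=> hD2 hDn a; rewrite /decodeL; case: pickP => [b /eqP hb | hno]; last first.
  by have := hno a; rewrite eqxx.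
congr Some; apply: enum_rank_inj; apply: val_inj.
have hc := card_Lab hD2 hDn.
apply: (bits_inj (M := MM n D)) => //.
- exact: leq_trans (ltn_ord _) hc.
- exact: leq_trans (ltn_ord _) hc.
Qed.

Lemma S0ex n D (hDn : D < n) (G : rel 'I_n) : exists S0 : seq 'I_n, size S0 = tt n D /\
  #|'I_n| ^ tt n D * #|unhit (hh D G) (AA D G) S0| <= (#|'I_n| - D.+1) ^ tt n D * #|AA D G|.
Proof. exact: (greedy (u0 hDn) (@hL n D G)). Qed.

Lemma trivial_case n D (G : rel 'I_n) u v k : n <= D -> dist_is G u v k -> D <= k -> False.
Proof.
move=> hnD [hw hmin] hk; have [k' [hk' hw']] := walk_short hw.
apply: (hmin k') => //; apply: leq_trans hk' (leq_trans hnD hk).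
Qed.

Theorem theorem5 :
  exists C : R, forall n D : nat, 2 <= D ->
    exists (e : rel 'I_n -> 'I_n -> seq bool)
           (d : seq bool -> seq bool -> option nat),
      DD_preserving_scheme D e d /\
      (forall (G : rel 'I_n) (u : 'I_n),
         Rle (INR (size (e G u))) (Rmult (Rmult C (Rdiv (INR n) (INR D))) (pow (ln (INR D)) 2))).
Proof.
exists CC => n D hD2.
case: (ltnP D n) => hDn; last first.
  exists (fun _ _ => [::]), (fun _ _ => None); split.
    move=> G; split => // u v k hd /andP[hk _]; exfalso; exact: trivial_case hDn hd hk.
  move=> G u /=.
  have hd : Rlt 0 (INR D) by apply: lt_0_INR; apply/ltP; apply: leq_trans hD2.
  have hl : Rlt 0 (ln (INR 2)).
    rewrite -ln_1; apply: ln_increasing; first exact: Rlt_0_1.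
    simpl; lra.
  apply: Rmult_le_pos; last by apply: pow2_ge_0.
  apply: Rmult_le_pos; last by apply: Rmult_le_pos; [apply: pos_INR | apply: Rlt_le; apply: Rinv_0_lt_compat].
  rewrite /CC; apply: Rmult_le_pos; first exact: pos_INR.
  apply: Rlt_le; apply: Rinv_0_lt_compat; exact: Rmult_lt_0_compat.
pose S0f (G : rel 'I_n) := proj1_sig (constructive_indefinite_description _ (S0ex hDn G)).
have S0P : forall G, size (S0f G) = tt n D /\
  #|'I_n| ^ tt n D * #|unhit (hh D G) (AA D G) (S0f G)| <= (#|'I_n| - D.+1) ^ tt n D * #|AA D G|.
  move=> G; exact: proj2_sig (constructive_indefinite_description _ (S0ex hDn G)).
exists (fun G u => codeL (lab hDn G (S0f G) u)).
exists (fun s1 s2 => match decodeL n D s1, decodeL n D s2 with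
                     | Some a, Some b => dec a b | _, _ => None end).
split.
  move=> G.
  have [h1 h2] := S0P G.
  have [c1 c2] := lab_correct hD2 hDn h1 h2.
  split => u v; rewrite !(decode_code hD2 hDn); [exact: c1 | exact: c2].
move=> G u; rewrite /codeL size_bits; exact: real_bound.
Qed.
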